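(* Let $K\ge2$, let $(X,Y)$ be a random pair with $X\in\mathbb{R}^d$, $Y\in\{1,\dots,K\}$ with arbitrary joint distribution, and let $\ell:\{1,\dots,K\}^2\to[0,\infty)$ be a task loss. Let $\alpha\in[0,1)\cup(1,\frac{K}{K-1}]$, let $\phi$ be one of $\phi_{\mathrm{LR}},\phi_{\mathrm{LS},\alpha},\phi_{\mathrm{MLS},\alpha},\phi_{\mathrm{LSQ}}$, and let $\bar g\in\operatorname{argmin}_{g:\mathbb{R}^d\to\mathbb{R}^K}\mathbb{E}[\phi(g(X),Y)]$. If $\phi\in\{\phi_{\mathrm{LR}},\phi_{\mathrm{MLS},\alpha},\phi_{\mathrm{LSQ}}\}$, define $h_\ell(v)\in\operatorname{argmin}_{l\in\{1,\dots,K\}}\sum_{k=1}^K q_{\mathrm{L},k}(v)\ell(l,k)$; if $\phi=\phi_{\mathrm{LS},\alpha}$, define $h_\ell(v)\in\operatorname{argmin}_{l\in\{1,\dots,K\}}\sum_{k=1}^K q_{\mathrm{RL},\alpha,k}(v)\ell(l,k)$. Then $\mathbb{E}[\ell(h_\ell(\bar g(X)),Y)]=\inf_{f:\mathbb{R}^d\to\{1,\dots,K\}}\mathbb{E}[\ell(f(X),Y)]$.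
   Context: Notation: $t_k(y)=\mathbb{1}(k=y)$; $s_\alpha(v)=(1-\alpha)v+\frac{\alpha}{K}$ (componentwise), with inverse $s_\alpha^{-1}(u)=(u-\frac{\alpha}{K})/(1-\alpha)$ for $\alpha\ne1$; $q_{\mathrm{L},k}(v)=e^{v_k}/\sum_{l=1}^K e^{v_l}$; $q_{\mathrm{RL},\alpha,k}(v)=s_\alpha^{-1}(q_{\mathrm{L},k}(v))$. The losses for $v\in\mathbb{R}^K$, $y\in\{1,\dots,K\}$ are $\phi_{\mathrm{LR}}(v,y)=-\sum_k t_k(y)\ln q_{\mathrm{L},k}(v)$, $\phi_{\mathrm{LS},\alpha}(v,y)=-\sum_k s_\alpha(t_k(y))\ln q_{\mathrm{L},k}(v)$, $\phi_{\mathrm{MLS},\alpha}(v,y)=-\sum_k s_\alpha(t_k(y))\ln s_\alpha(q_{\mathrm{L},k}(v))$, $\phi_{\mathrm{LSQ}}(v,y)=\sum_k(t_k(y)-q_{\mathrm{L},k}(v))^2$. Minimizations/infima are over measurable functions. *)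

(* Defs.v *)
From HB Require Import structures.
From mathcomp Require Import all_boot all_order all_algebra.
From mathcomp Require Import all_classical all_reals all_analysis.
Set Implicit Arguments. Unset Strict Implicit. Unset Printing Implicit Defensive.
Import Order.TTheory GRing.Theory Num.Theory.
Local Open Scope classical_set_scope.
Local Open Scope ring_scope.

Section Losses.
Variables (R : realType) (K : nat).

Definition tgt (y k : 'I_K) : R := if k == y then 1 else 0.
Definition smooth (a u : R) : R := (1 - a) * u + a / K%:R.
Definition smooth_inv (a u : R) : R := (u - a / K%:R) / (1 - a).
Definition qL (v : 'I_K -> R) (k : 'I_K) : R :=
  expR (v k) / \sum_(l < K) expR (v l).
Definition qRL (a : R) (v : 'I_K -> R) (k : 'I_K) : R := smooth_inv a (qL v k).

Definition phi_LR (v : 'I_K -> R) (y : 'I_K) : R :=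
  - \sum_(k < K) tgt y k * ln (qL v k).
Definition phi_LS (a : R) (v : 'I_K -> R) (y : 'I_K) : R :=
  - \sum_(k < K) smooth a (tgt y k) * ln (qL v k).
Definition phi_MLS (a : R) (v : 'I_K -> R) (y : 'I_K) : R :=
  - \sum_(k < K) smooth a (tgt y k) * ln (smooth a (qL v k)).
Definition phi_LSQ (v : 'I_K -> R) (y : 'I_K) : R :=
  \sum_(k < K) (tgt y k - qL v k) ^+ 2.

End Losses.

Inductive loss_kind := LR | LS | MLS | LSQ.

Definition phi (R : realType) (K : nat) (c : loss_kind) (a : R)
  : ('I_K -> R) -> 'I_K -> R :=
  match c with
  | LR => @phi_LR R K
  | LS => @phi_LS R K a
  | MLS => @phi_MLS R K a
  | LSQ => @phi_LSQ R K
  end.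

Definition qdec (R : realType) (K : nat) (c : loss_kind) (a : R)
  : ('I_K -> R) -> 'I_K -> R :=
  match c with
  | LS => @qRL R K a
  | _ => @qL R K
  end.

Definition is_decision_rule (R : realType) (K : nat) (q : ('I_K -> R) -> 'I_K -> R)
  (ell : 'I_K -> 'I_K -> R) (h : ('I_K -> R) -> 'I_K) : Prop :=
  forall v (l : 'I_K), \sum_(k < K) q v k * ell (h v) k <= \sum_(k < K) q v k * ell l k.

Definition measurable_score (R : realType) (d K : nat)
  (g : d.-tuple R -> 'I_K -> R) : Prop :=
  forall k : 'I_K, measurable_fun setT (fun x => g x k).

Definition measurable_classifier (R : realType) (d K : nat)
  (f : d.-tuple R -> 'I_K) : Prop :=
  forall k : 'I_K, measurable (f @^-1` [set k]).

(* Main.v *)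
Require Import Defs.
From HB Require Import structures.
From mathcomp Require Import all_boot all_order all_algebra.
From mathcomp Require Import all_classical all_reals all_analysis.
From mathcomp.algebra_tactics Require Import ring lra.
Import Order.TTheory GRing.Theory Num.Theory.
Import measurable_realfun HBNNSimple.
Local Open Scope classical_set_scope.
Local Open Scope ring_scope.

Section Alg.
Variables (R : realType) (K : nat).
Hypothesis hK : (2 <= K)%N.
Implicit Types (v : 'I_K -> R) (k : 'I_K).

Lemma Kgt0 : (0 : R) < K%:R.
Proof. by rewrite ltr0n (leq_trans _ hK). Qed.

Lemma sum_expR_gt0 (v : 'I_K -> R) : 0 < \sum_(l < K) expR (v l).
Proof.
have k0 : 'I_K := Ordinal (leq_trans (isT : (0 < 2)%N) hK).
rewrite (bigD1 k0) //=; apply: ltr_pwDl; first exact: expR_gt0.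
by apply: sumr_ge0 => i _; exact: ltW (expR_gt0 _).
Qed.

Lemma qL_gt0 v k : 0 < qL v k.
Proof. by rewrite /qL divr_gt0 // ?expR_gt0 // sum_expR_gt0. Qed.

Lemma qL_sum v : \sum_(k < K) qL v k = 1.
Proof.
rewrite /qL -mulr_suml mulfV //; exact: lt0r_neq0 (sum_expR_gt0 v).
Qed.

Lemma qL_lt1 v k : qL v k < 1.
Proof.
have := qL_sum v; rewrite (bigD1 k) //= => <-.
rewrite ltrDl; have k1 : exists j : 'I_K, j != k.
  case: k => [[|m] hm].
    by exists (Ordinal (leq_trans (isT : (1 < 2)%N) hK)).
  by exists (Ordinal (leq_trans (isT : (0 < 2)%N) hK)).
case: k1 => j jk; rewrite (bigD1 j) //=; apply: ltr_pwDl; first exact: qL_gt0.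
by apply: sumr_ge0 => i _; exact: ltW (qL_gt0 _ _).
Qed.

Lemma qL_ln (m : 'I_K -> R) : (forall k, 0 < m k) -> \sum_(k < K) m k = 1 ->
  forall k, qL (fun k => ln (m k)) k = m k.
Proof.
move=> m0 m1 k; rewrite /qL.
under eq_bigr do rewrite lnK ?posrE //.
by rewrite lnK ?posrE // m1 divr1.
Qed.


Variable a : R.
Hypothesis ha : (0 <= a < 1) \/ (1 < a <= K%:R / (K%:R - 1)).

Let Kr := (K%:R : R).
Lemma Kr_ge2 : 2 <= Kr.
Proof. by rewrite /Kr ler_nat. Qed.

Lemma ha_facts : [/\ 0 <= a, a != 1 & a * (Kr - 1) <= Kr].
Proof.
have K2 := Kr_ge2.
case: ha => /andP[h1 h2].
  split => //; first by rewrite lt_eqF.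
  have : a * (Kr - 1) <= 1 * (Kr - 1) by rewrite ler_pM2r ?ltW //; lra.
  lra.
split; first lra; first by rewrite gt_eqF.
by rewrite -ler_pdivlMr //; lra.
Qed.

Let b := a / Kr.
Lemma b_facts : [/\ 0 <= b, a = b * Kr & b * (Kr - 1) <= 1].
Proof.
have K2 := Kr_ge2; have [a0 a1 aK] := ha_facts.
have Kp : 0 < Kr by lra.
split; first by rewrite /b divr_ge0 // ltW.
  by rewrite /b divfK // gt_eqF.
rewrite /b mulrAC ler_pdivrMr //; lra.
Qed.

Lemma smoothE u : @smooth R K a u = (1 - b * Kr) * u + b.
Proof. by rewrite /smooth; case: b_facts => _ <- _. Qed.

Lemma smooth_ge0 u : 0 <= u <= 1 -> 0 <= @smooth R K a u.
Proof.
move=> /andP[u0 u1]; rewrite smoothE; have [b0 _ bK] := b_facts.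
have h1 : 0 <= u * (1 - b * (Kr - 1)) by apply: mulr_ge0; lra.
have h2 : 0 <= b * (1 - u) by apply: mulr_ge0; lra.
nra.
Qed.

Lemma smooth_le1 u : 0 <= u <= 1 -> @smooth R K a u <= 1.
Proof.
move=> /andP[u0 u1]; rewrite smoothE; have [b0 _ bK] := b_facts.
have K2 := Kr_ge2.
have h1 : 0 <= (1 - u) * (1 - b * Kr + b) by apply: mulr_ge0; nra.
case: ha => /andP[h3 h4].
- have h5 : 0 <= u * b * (Kr - 1) by rewrite -mulrA; apply: mulr_ge0 => //; apply: mulr_ge0; lra.
  nra.
- have h5 : 1 < b * Kr by case: b_facts => _ <- _.
  have h6 : 0 <= u * (b * Kr - 1) by apply: mulr_ge0; lra.
  have h7 : b <= 1 by nra.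
  nra.
Qed.

Lemma smooth_gt0 u : 0 < u < 1 -> 0 < @smooth R K a u.
Proof.
move=> /andP[u0 u1]; rewrite smoothE; have [b0 _ bK] := b_facts.
have K2 := Kr_ge2.
case: ha => /andP[h3 h4].
- have h5 : b * Kr < 1 by case: b_facts => _ <- _.
  have h6 : 0 < u * (1 - b * Kr) by apply: mulr_gt0; lra.
  nra.
- have h6 : 0 < (1 - u) * (b * (Kr - 1)).
    apply: mulr_gt0; first lra.
    have h5 : 1 < b * Kr by case: b_facts => _ <- _.
    nra.
  have h7 : 0 <= u * (1 - b * (Kr - 1)) by apply: mulr_ge0; lra.
  nra.
Qed.

Lemma smooth_inj u w : @smooth R K a u = @smooth R K a w -> u = w.
Proof.
rewrite /smooth => /addIr /mulfI; apply.
by have [_ a1 _] := ha_facts; rewrite subr_eq0 eq_sym.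
Qed.

Lemma smooth_invK u : @smooth_inv R K a (@smooth R K a u) = u.
Proof.
rewrite /smooth_inv /smooth addrK mulrAC divff ?mul1r //.
by have [_ a1 _] := ha_facts; rewrite subr_eq0 eq_sym.
Qed.


Lemma tgt01 y k : 0 <= @tgt R K y k <= 1.
Proof. by rewrite /tgt; case: (k == y) => /=; rewrite ?lexx ?ler01. Qed.

Lemma sum_tgtF (p : 'I_K -> R) (F : R -> R) k : \sum_(y < K) p y = 1 ->
  \sum_(y < K) p y * F (@tgt R K y k) = p k * F 1 + (1 - p k) * F 0.
Proof.
move=> p1; rewrite (bigD1 k) //= /tgt eqxx; congr (_ + _).
have -> : 1 - p k = \sum_(y < K | y != k) p y.
  by rewrite -p1 (bigD1 k) //= addrC addrK.
rewrite mulr_suml; apply: eq_bigr => y yk.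
by rewrite eq_sym (negbTE yk).
Qed.

Lemma Ccr_gen (p : 'I_K -> R) (F : 'I_K -> R -> R) : \sum_(y < K) p y = 1 ->
  \sum_(y < K) p y * \sum_(k < K) F k (@tgt R K y k) =
  \sum_(k < K) (p k * F k 1 + (1 - p k) * F k 0).
Proof.
move=> p1; under eq_bigr do rewrite mulr_sumr.
rewrite exchange_big /=; apply: eq_bigr => k _.
rewrite -(sum_tgtF p (F k) k p1); apply: eq_bigr => y _; done.
Qed.

Definition Ccr c (v p : 'I_K -> R) := \sum_(y < K) p y * phi c a v y.

Lemma sum_smooth (p : 'I_K -> R) : \sum_(k < K) p k = 1 ->
  \sum_(k < K) @smooth R K a (p k) = 1.
Proof.
move=> p1; rewrite /smooth big_split /= -mulr_sumr p1 mulr1 sumr_const card_ord.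
rewrite -[_ *+ K]mulr_natr divfK ?subrK //.
by have := Kgt0; rewrite lt0r => /andP[].
Qed.

Lemma CcrE_LR v p : \sum_(k < K) p k = 1 ->
  Ccr LR v p = - \sum_(k < K) p k * ln (qL v k).
Proof.
move=> p1; rewrite /Ccr /= /phi_LR.
under eq_bigr do rewrite -sumrN.
rewrite (Ccr_gen p (fun k t => - (t * ln (qL v k)))) // -sumrN.
by apply: eq_bigr => k _; ring.
Qed.

Lemma CcrE_LS v p : \sum_(k < K) p k = 1 ->
  Ccr LS v p = - \sum_(k < K) @smooth R K a (p k) * ln (qL v k).
Proof.
move=> p1; rewrite /Ccr /= /phi_LS.
under eq_bigr do rewrite -sumrN.
rewrite (Ccr_gen p (fun k t => - (@smooth R K a t * ln (qL v k)))) // -sumrN.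
by apply: eq_bigr => k _; rewrite /smooth; ring.
Qed.

Lemma CcrE_MLS v p : \sum_(k < K) p k = 1 ->
  Ccr MLS v p = - \sum_(k < K) @smooth R K a (p k) * ln (@smooth R K a (qL v k)).
Proof.
move=> p1; rewrite /Ccr /= /phi_MLS.
under eq_bigr do rewrite -sumrN.
rewrite (Ccr_gen p (fun k t => - (@smooth R K a t * ln (@smooth R K a (qL v k))))) // -sumrN.
by apply: eq_bigr => k _; rewrite /smooth; ring.
Qed.

Lemma CcrE_LSQ v p : \sum_(k < K) p k = 1 ->
  Ccr LSQ v p = \sum_(k < K) (p k * (1 - qL v k) ^+ 2 + (1 - p k) * (qL v k) ^+ 2).
Proof.
move=> p1; rewrite /Ccr /= /phi_LSQ.
rewrite (Ccr_gen p (fun k t => (t - qL v k) ^+ 2)) //.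
by apply: eq_bigr => k _; ring.
Qed.


Lemma gibbs_term (P Q : R) : 0 <= P -> 0 < Q ->
  (P - Q) ^+ 2 / (2 * (P + Q)) + (P - Q) / 2 <= P * ln ((Q + P) / 2) - P * ln Q.
Proof.
move=> P0 Q0.
have M0 : 0 < (Q + P) / 2 by apply: divr_gt0; lra.
have PQ : 0 < P + Q by lra.
have h1 : ln Q - ln ((Q + P) / 2) <= Q / ((Q + P) / 2) - 1.
  rewrite -ln_div ?posrE //.
  have := @le_ln1Dx R (Q / ((Q + P) / 2) - 1).
  rewrite addrCA subrr addr0; apply.
  have : 0 < Q / ((Q + P) / 2) by apply: divr_gt0.
  lra.
have h2 := ler_wpM2l P0 h1.
have e : P * (Q / ((Q + P) / 2) - 1) =
  - ((P - Q) ^+ 2 / (2 * (P + Q)) + (P - Q) / 2).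
  by field; rewrite gt_eqF.
rewrite e in h2; lra.
Qed.

Definition sqd (P Q : R) := (P - Q) ^+ 2 / (2 * (P + Q)).

Lemma sqd_ge0 P Q : 0 <= P -> 0 < Q -> 0 <= sqd P Q.
Proof. move=> *; apply: divr_ge0; [exact: sqr_ge0|lra]. Qed.

Lemma sqd_eq0 P Q : 0 <= P -> 0 < Q -> sqd P Q = 0 -> P = Q.
Proof.
move=> P0 Q0 /eqP; rewrite /sqd mulf_eq0 invr_eq0 => /orP[|].
  by rewrite sqrf_eq0 subr_eq0 => /eqP.
move/eqP => h; lra.
Qed.

Lemma gibbs (P Q : 'I_K -> R) : (forall k, 0 <= P k) -> \sum_(k < K) P k = 1 ->
  (forall k, 0 < Q k) -> \sum_(k < K) Q k = 1 ->
  \sum_(k < K) sqd (P k) (Q k) <=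
  \sum_(k < K) P k * ln ((Q k + P k) / 2) - \sum_(k < K) P k * ln (Q k).
Proof.
move=> P0 P1 Q0 Q1.
have e : \sum_(k < K) sqd (P k) (Q k) =
  \sum_(k < K) (sqd (P k) (Q k) + (P k - Q k) / 2).
  rewrite big_split /= -mulr_suml sumrB P1 Q1 subrr mul0r addr0 //.
rewrite e -sumrB; apply: ler_sum => k _; exact: gibbs_term.
Qed.

Lemma gibbs_cons (P Q : 'I_K -> R) : (forall k, 0 <= P k) -> \sum_(k < K) P k = 1 ->
  (forall k, 0 < Q k) -> \sum_(k < K) Q k = 1 ->
  - \sum_(k < K) P k * ln ((Q k + P k) / 2) <= - \sum_(k < K) P k * ln (Q k) /\
  (- \sum_(k < K) P k * ln (Q k) <= - \sum_(k < K) P k * ln ((Q k + P k) / 2) ->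
   forall k, P k = Q k).
Proof.
move=> P0 P1 Q0 Q1; have g := gibbs P Q P0 P1 Q0 Q1.
have s0 : 0 <= \sum_(k < K) sqd (P k) (Q k).
  by apply: sumr_ge0 => k _; exact: sqd_ge0.
split; first lra.
move=> h k; apply: sqd_eq0 => //.
have s00 : \sum_(k < K) sqd (P k) (Q k) = 0 by lra.
by apply: (psumr_eq0P _ s00) => // i _; exact: sqd_ge0.
Qed.


Definition tau c (p : 'I_K -> R) k := if c is LS then @smooth R K a (p k) else p k.
Definition vp c v (p : 'I_K -> R) := fun k => ln ((qL v k + tau c p k) / 2).

Lemma p_le1 (p : 'I_K -> R) k : (forall k, 0 <= p k) -> \sum_(k < K) p k = 1 -> p k <= 1.
Proof.
move=> p0 p1; rewrite -p1 (bigD1 k) //= lerDl.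
by apply: sumr_ge0 => i _.
Qed.

Lemma tau_ge0 c (p : 'I_K -> R) k : (forall k, 0 <= p k) -> \sum_(k < K) p k = 1 ->
  0 <= tau c p k.
Proof.
move=> p0 p1; case: c => //=; apply: smooth_ge0.
by rewrite p0 p_le1.
Qed.

Lemma tau_sum c (p : 'I_K -> R) : \sum_(k < K) p k = 1 -> \sum_(k < K) tau c p k = 1.
Proof. by case: c => //= p1; rewrite sum_smooth. Qed.

Lemma qL_vp c v (p : 'I_K -> R) : (forall k, 0 <= p k) -> \sum_(k < K) p k = 1 ->
  forall k, qL (vp c v p) k = (qL v k + tau c p k) / 2.
Proof.
move=> p0 p1; apply: qL_ln.
  move=> k; have := qL_gt0 v k; have := tau_ge0 c p k p0 p1; lra.
rewrite -mulr_suml big_split /= qL_sum tau_sum //; lra.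
Qed.

Lemma pointwise c v (p : 'I_K -> R) : (forall k, 0 <= p k) -> \sum_(k < K) p k = 1 ->
  Ccr c (vp c v p) p <= Ccr c v p /\
  (Ccr c v p <= Ccr c (vp c v p) p -> forall k, qdec c a v k = p k).
Proof.
move=> p0 p1; have e := qL_vp c v p p0 p1.
have q0 := qL_gt0 v; have q1 := qL_sum v.
case: c e => /= e.
- rewrite !CcrE_LR //; under eq_bigr do rewrite e.
  have [h1 h2] := gibbs_cons p (qL v) p0 p1 q0 q1.
  by split => // h k; rewrite h2.
- rewrite !CcrE_LS //; under eq_bigr do rewrite e.
  have s0 k : 0 <= @smooth R K a (p k) by apply: smooth_ge0; rewrite p0 p_le1.
  have [h1 h2] := gibbs_cons (fun k => @smooth R K a (p k)) (qL v) s0 (sum_smooth p p1) q0 q1.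
  split => // h k; rewrite /qRL -h2 // smooth_invK //.
- rewrite !CcrE_MLS //; under eq_bigr do rewrite e.
  have s0 k : 0 <= @smooth R K a (p k) by apply: smooth_ge0; rewrite p0 p_le1.
  have sq0 k : 0 < @smooth R K a (qL v k) by apply: smooth_gt0; rewrite qL_gt0 qL_lt1.
  have eM k : @smooth R K a ((qL v k + p k) / 2) =
    (@smooth R K a (qL v k) + @smooth R K a (p k)) / 2.
    by rewrite /smooth; field; rewrite (gt_eqF Kgt0).
  under eq_bigr do rewrite eM.
  have [h1 h2] := gibbs_cons (fun k => @smooth R K a (p k)) (fun k => @smooth R K a (qL v k))
     s0 (sum_smooth p p1) sq0 (sum_smooth _ q1).
  split => // h k; apply: smooth_inj; rewrite h2 //.
- rewrite !CcrE_LSQ //; under eq_bigr do rewrite e.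
  have d : \sum_(k < K) (p k * (1 - qL v k) ^+ 2 + (1 - p k) * qL v k ^+ 2) -
    \sum_(k < K) (p k * (1 - (qL v k + p k) / 2) ^+ 2 + (1 - p k) * ((qL v k + p k) / 2) ^+ 2)
    = \sum_(k < K) (3 / 4 * (qL v k - p k) ^+ 2).
    by rewrite -sumrB; apply: eq_bigr => k _; field.
  have s0 : 0 <= \sum_(k < K) (3 / 4 * (qL v k - p k) ^+ 2).
    by apply: sumr_ge0 => k _; apply: mulr_ge0; [lra|exact: sqr_ge0].
  split; first lra.
  move=> h k.
  have s00 : \sum_(k < K) (3 / 4 * (qL v k - p k) ^+ 2) = 0 by lra.
  have hk : 3 / 4 * (qL v k - p k) ^+ 2 = 0.
    by apply: (psumr_eq0P _ s00) => // i _; apply: mulr_ge0; [lra|exact: sqr_ge0].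
  move/eqP: hk; rewrite mulf_eq0 sqrf_eq0 subr_eq0 => /orP[|/eqP //].
  move/eqP => h'; lra.
Qed.

Lemma phi_ge0 c v y : 0 <= phi c a v y.
Proof.
have q0 := qL_gt0 v; have q1 := qL_lt1 v.
case: c => /=; rewrite ?/phi_LR ?/phi_LS ?/phi_MLS ?/phi_LSQ.
- rewrite oppr_ge0; apply: sumr_le0 => k _; apply: mulr_ge0_le0.
    by case/andP: (tgt01 y k).
  by apply: ln_le0; exact: ltW.
- rewrite oppr_ge0; apply: sumr_le0 => k _; apply: mulr_ge0_le0.
    exact/smooth_ge0/tgt01.
  by apply: ln_le0; exact: ltW.
- rewrite oppr_ge0; apply: sumr_le0 => k _; apply: mulr_ge0_le0.
    exact/smooth_ge0/tgt01.
  by apply: ln_le0; apply: smooth_le1; rewrite ltW // ltW.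
- by apply: sumr_ge0 => k _; exact: sqr_ge0.
Qed.

End Alg.
Section Meas.
Context (R : realType) (dT : measure_display) (T : measurableType dT)
  (P : probability T R) (K : nat) (dS : measure_display) (S : measurableType dS)
  (X : T -> S) (Y : T -> 'I_K)
  (mX : measurable_fun setT X)
  (mY : forall k : 'I_K, measurable (Y @^-1` [set k])).


Definition muk (k : 'I_K) (A : set S) : \bar R := P (X @^-1` A `&` Y @^-1` [set k]).

Section muk_measure.
Variable k : 'I_K.

Let mXA (A : set S) : measurable A -> measurable (X @^-1` A `&` Y @^-1` [set k]).
Proof.
move=> mA; apply: measurableI => //.
by rewrite -[X in measurable X]setTI; exact: mX.
Qed.

Let muk0 : muk k set0 = 0%E.
Proof. by rewrite /muk preimage_set0 set0I measure0. Qed.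

Let muk_ge0 A : (0 <= muk k A)%E.
Proof. exact: measure_ge0. Qed.

Let muk_sigma_additive : semi_sigma_additive (muk k).
Proof.
move=> F mF tF mUF; rewrite /muk preimage_bigcup setI_bigcupl.
apply: measure_semi_sigma_additive.
- by move=> n; exact: mXA.
- apply/trivIsetP => /= i j _ _ ij.
  rewrite setIACA setIid -preimage_setI.
  by move/trivIsetP : tF => /(_ _ _ _ _ ij) ->//; rewrite preimage_set0 set0I.
- by rewrite -setI_bigcupl -preimage_bigcup; exact: mXA.
Qed.

HB.instance Definition _ := isMeasure.Build _ _ _ (muk k)
  muk0 muk_ge0 muk_sigma_additive.

Let muk_fin : fin_num_fun (muk k).
Proof.
move=> A mA; rewrite ge0_fin_numE ?measure_ge0 //.
have h := probability_le1 P (mXA _ mA).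
rewrite /muk (le_lt_trans h) //; exact: ltry.
Qed.

HB.instance Definition _ := Measure_isFinite.Build _ _ _ (muk k) muk_fin.

End muk_measure.

Definition Xm : {mfun T >-> S} := HB.pack X (isMeasurableFun.Build _ _ _ _ X mX).
Definition PX := distribution P Xm.

Lemma muk_dom k : muk k `<< PX.
Proof.
move=> N HN A mA AN; have PA0 := HN A mA AN.
apply/eqP; rewrite eq_le measure_ge0 andbT -PA0 /muk /PX /distribution /pushforward /=.
apply: le_measure; rewrite ?inE //.
- apply: measurableI => //; rewrite -[X in measurable X]setTI; exact: mX.
- rewrite -[X in measurable X]setTI; exact: mX.

Qed.

Definition eta k : S -> \bar R := Radon_Nikodym_SigmaFinite.f (muk k) PX.

Lemma eta_ge0 k x : (0 <= eta k x)%E.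
Proof. exact: Radon_Nikodym_SigmaFinite.f_ge0 (muk_dom k) x. Qed.

Lemma eta_fin k x : eta k x \is a fin_num.
Proof. exact: Radon_Nikodym_SigmaFinite.f_fin_num (muk_dom k) x. Qed.

Lemma meta k : measurable_fun setT (eta k).
Proof. exact: measurable_int (Radon_Nikodym_SigmaFinite.f_integrable (muk_dom k)). Qed.

Definition etar k x := fine (eta k x).

Lemma etarE k x : (etar k x)%:E = eta k x.
Proof. by rewrite /etar fineK // eta_fin. Qed.

Lemma etar_ge0 k x : 0 <= etar k x.
Proof. by rewrite -lee_fin etarE eta_ge0. Qed.

Lemma metar k : measurable_fun setT (etar k).
Proof. exact: measurableT_comp (fine_measurable measurableT) (meta k). Qed.

Lemma approx_simple k (h : {nnsfun S >-> R}) :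
  (\int[muk k]_x (h x)%:E = \int[P]_(w in Y @^-1` [set k]) (h (X w))%:E)%E.
Proof.
have mD := mY k.
have mh y : measurable (h @^-1` [set y]) by exact: (measurable_funPTI h (measurable_set1 y)).
have mXh y : measurable (X @^-1` (h @^-1` [set y])).
  by rewrite -[X in measurable X]setTI; apply: mX.
have fr : finite_set (range h) by exact: fimfunP.
under eq_integral do rewrite fimfunE -fsumEFin //.
under [RHS]eq_integral do rewrite fimfunE -fsumEFin //.
rewrite ge0_integral_fsum //; last 2 first.
1,2: first [by move=> y x _; rewrite EFinM nnfun_muleindic_ge0 |
  by move=> y; apply/measurable_EFinP; apply: measurable_funM => //; exact: measurable_indic].
rewrite ge0_integral_fsum //; last 2 first.
1,2: first [by move=> y x _; rewrite EFinM nnfun_muleindic_ge0 |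
  move=> y; apply/measurable_EFinP; apply: measurable_funM => //;
  rewrite (_ : (fun x => \1_(h @^-1` [set y]) (X x)) = \1_(X @^-1` (h @^-1` [set y])));
    [exact: measurable_indic | by apply/funext => w; rewrite !indicE]].
apply: eq_fsbigr => y yr.
rewrite integralZl_indic_nnsfun // integral_indic // ?setIT.
have -> : (\int[P]_(w in Y @^-1` [set k]) (y * \1_(h @^-1` [set y]) (X w))%:E =
  \int[P]_(w in Y @^-1` [set k]) (y * \1_(X @^-1` (h @^-1` [set y])) w)%:E)%E.
  by apply: eq_integral => w _; rewrite !indicE.
rewrite (integralZl_indic _ (fun y => X @^-1` (h @^-1` [set y]))) //.
- by rewrite integral_indic.
- move=> y0; apply/seteqP; split => // w /= hy.
  have y0p : 0 <= y by rewrite -hy; exact: (@fun_ge0 _ _ h (X w)).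
  lra.
Qed.

Lemma approxA k (F : S -> R) : (forall x, 0 <= F x) -> measurable_fun setT F ->
  (\int[muk k]_x (F x)%:E = \int[P]_(w in Y @^-1` [set k]) (F (X w))%:E)%E.
Proof.
move=> F0 mF; have mD := mY k.
have mFE : measurable_fun setT (EFin \o F) by exact/measurable_EFinP.
pose h := nnsfun_approx measurableT mFE.
have F0E : forall x, setT x -> (0 <= (EFin \o F) x)%E by move=> x _; rewrite lee_fin.
have cvh x : (EFin \o (fun n => h n x)) n @[n --> \oo] --> (EFin \o F) x.
  exact: (@cvg_nnsfun_approx _ _ _ _ measurableT _ mFE F0E x Logic.I).
have mh n : measurable_fun setT (h n) by exact: measurable_funP.
transitivity (limn (fun n => \int[muk k]_x (h n x)%:E)%E).
  rewrite -monotone_convergence //.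
  - by apply: eq_integral => x _; apply/esym/cvg_lim => //; exact: cvh x.
  - by move=> n; apply/measurable_EFinP.
  - by move=> n x _; rewrite lee_fin; exact: (@fun_ge0 _ _ (h n) x).
  - by move=> x _ a b ab; rewrite lee_fin; exact/lefP/nd_nnsfun_approx.
transitivity (limn (fun n => \int[P]_(w in Y @^-1` [set k]) (h n (X w))%:E)%E); last first.
  rewrite -monotone_convergence //.
  - by apply: eq_integral => x _; apply/cvg_lim => //; exact: cvh (X x).
  - move=> n; apply/measurable_EFinP; apply: measurableT_comp => //.
    exact: measurable_funTS.
  - by move=> n x _; rewrite lee_fin; exact: (@fun_ge0 _ _ (h n) (X x)).
  - by move=> x _ a b ab; rewrite lee_fin; exact/lefP/nd_nnsfun_approx.
by congr (limn _); apply/funext => n; exact: approx_simple.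
Qed.

Lemma disint k (F : S -> R) : (forall x, 0 <= F x) -> measurable_fun setT F ->
  (\int[P]_(w in Y @^-1` [set k]) (F (X w))%:E =
   \int[P]_w (F (X w) * etar k (X w))%:E)%E.
Proof.
move=> F0 mF; rewrite -approxA //.
rewrite -(Radon_Nikodym_SigmaFinite.change_of_variables (muk_dom k)) //;
  try (by move=> x; rewrite lee_fin); try (by apply/measurable_EFinP).
transitivity (\int[PX]_x (F x * etar k x)%:E)%E.
  by apply: eq_integral => x _; rewrite EFinM etarE.
rewrite /PX ge0_integral_distribution //.
- apply/measurable_EFinP; apply: measurable_funM => //; exact: metar.
- by move=> x; rewrite lee_fin mulr_ge0 // etar_ge0.
Qed.

Lemma risk_decomp (G : 'I_K -> S -> R) : (forall y x, 0 <= G y x) ->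
  (forall y, measurable_fun setT (G y)) ->
  (\int[P]_w (G (Y w) (X w))%:E =
   \int[P]_w (\sum_(y < K) G y (X w) * etar y (X w))%:E)%E.
Proof.
move=> G0 mG.
have mI y : measurable_fun setT (fun w => G y (X w) * \1_(Y @^-1` [set y]) w).
  apply: measurable_funM; first exact: measurableT_comp.
  exact: measurable_indic.
transitivity (\int[P]_w (\sum_(y < K) (G y (X w) * \1_(Y @^-1` [set y]) w)%:E))%E.
  apply: eq_integral => w _; rewrite sumEFin; congr (_%:E).
  rewrite (bigD1 (Y w)) //= indicE mem_set // mulr1 big1 ?addr0 //.
  move=> y yY; rewrite indicE memNset ?mulr0 //= => Yy.
  by move: yY; rewrite -Yy eqxx.
rewrite ge0_integral_sum //; last 2 first.
- by move=> y; apply/measurable_EFinP; exact: mI.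
- by move=> y w _; rewrite lee_fin mulr_ge0 // indic_ge0.
transitivity (\sum_(y < K) \int[P]_w (G y (X w) * etar y (X w))%:E)%E; last first.
  rewrite -ge0_integral_sum //.
  - by congr (integral _ _ _); apply/funext => w; rewrite sumEFin.
  - move=> y; apply/measurable_EFinP; apply: measurable_funM.
      exact: measurableT_comp.
    exact: measurableT_comp (metar y) mX.
  - by move=> y w _; rewrite lee_fin mulr_ge0 // etar_ge0.
apply: eq_bigr => y _; rewrite -disint //.
rewrite [RHS]integral_mkcond; apply: eq_integral => w _.
by rewrite epatch_indic /= EFinM.
Qed.

End Meas.

Section Mfun.
Context (R : realType) (K : nat) (hK : (2 <= K)%N) (dS : measure_display)
  (S : measurableType dS) (a : R).

Lemma qL_expE (v : 'I_K -> R) k :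
  qL v k = expR (v k - ln (\sum_(l < K) expR (v l))).
Proof.
by rewrite expRB lnK // posrE sum_expR_gt0.
Qed.

Lemma mqL (g : S -> 'I_K -> R) : (forall k, measurable_fun setT (fun x => g x k)) ->
  forall k, measurable_fun setT (fun x => qL (g x) k).
Proof.
move=> mg k.
rewrite (_ : (fun x => qL (g x) k) =
  (fun x => expR (g x k - ln (\sum_(l < K) expR (g x l))))); last first.
  by apply/funext => x; rewrite qL_expE.
apply: measurableT_comp => //; apply: measurable_funB => //.
apply: measurableT_comp => //; apply: measurable_sum => l.
exact: measurableT_comp.
Qed.

Lemma mphi c (g : S -> 'I_K -> R) : (forall k, measurable_fun setT (fun x => g x k)) ->
  forall y, measurable_fun setT (fun x => phi c a (g x) y).
Proof.
move=> mg y; have mq := mqL g mg.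
case: c => /=; rewrite ?/phi_LR ?/phi_LS ?/phi_MLS ?/phi_LSQ.
- apply: measurable_funN; apply: measurable_sum => k.
  by apply: measurable_funM => //; exact: measurableT_comp.
- apply: measurable_funN; apply: measurable_sum => k.
  by apply: measurable_funM => //; exact: measurableT_comp.
- apply: measurable_funN; apply: measurable_sum => k.
  apply: measurable_funM => //; apply: measurableT_comp => //.
  rewrite /smooth; apply: measurable_funD => //; exact: measurable_funM.
- apply: measurable_sum => k; apply: measurable_funX.
  exact: measurable_funB.
Qed.

Lemma mclass (f : S -> 'I_K) (G : 'I_K -> R) :
  (forall k, measurable (f @^-1` [set k])) -> measurable_fun setT (fun x => G (f x)).
Proof.
move=> mf.
rewrite (_ : (fun x => G (f x)) = (fun x => \sum_(l < K) G l * \1_(f @^-1` [set l]) x)).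
  by apply: measurable_sum => l; apply: measurable_funM => //; exact: measurable_indic.
apply/funext => x; rewrite (bigD1 (f x)) //= indicE mem_set // mulr1 big1 ?addr0 //.
move=> y yf; rewrite indicE memNset ?mulr0 //= => fy.
by move: yf; rewrite -fy eqxx.
Qed.

End Mfun.

Section Main.
Context (R : realType) (dT : measure_display) (T : measurableType dT)
  (P : probability T R) (K : nat) (hK : (2 <= K)%N) (dS : measure_display)
  (S : measurableType dS)
  (X : T -> S) (Y : T -> 'I_K) (mX : measurable_fun setT X)
  (mY : forall k : 'I_K, measurable (Y @^-1` [set k]))
  (ell : 'I_K -> 'I_K -> R) (ell_ge0 : forall l k, 0 <= ell l k)
  (a : R) (ha : (0 <= a < 1) \/ (1 < a <= K%:R / (K%:R - 1))) (c : loss_kind).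

Local Notation et := (etar R dT T P K dS S X Y mX mY).
Local Notation Cc := (Ccr R K a c).
Definition mscore (g : S -> 'I_K -> R) := forall k, measurable_fun setT (fun x => g x k).

Lemma Cc_ge0 v p : (forall y, 0 <= p y) -> 0 <= Cc v p.
Proof.
move=> p0; apply: sumr_ge0 => y _; apply: mulr_ge0 => //.
exact: phi_ge0.
Qed.

Lemma mCc g : mscore g -> measurable_fun setT (fun x => Cc (g x) (fun y => et y x)).
Proof.
move=> mg; apply: measurable_sum => y; apply: measurable_funM.
  exact: metar.
exact: (@mphi R K hK dS S a c g mg).
Qed.

Lemma riskE g : mscore g ->
  (\int[P]_w (phi c a (g (X w)) (Y w))%:E =
   \int[P]_w (Cc (g (X w)) (fun y => et y (X w)))%:E)%E.
Proof.
move=> mg.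
rewrite (@risk_decomp R dT T P K dS S X Y mX mY (fun y x => phi c a (g x) y)).
- apply: eq_integral => w _; congr (_%:E); apply: eq_bigr => y _.
  by rewrite mulrC.
- by move=> y x; exact: phi_ge0.
- by move=> y; exact: (@mphi R K hK dS S a c g mg).
Qed.

Definition ssum x := \sum_(y < K) et y x.
Definition pn x y := et y x * expR (- ln (ssum x)).

Lemma ssum_ge0 x : 0 <= ssum x.
Proof. by apply: sumr_ge0 => y _; exact: etar_ge0. Qed.

Lemma pnE x y : 0 < ssum x -> pn x y = et y x / ssum x.
Proof. by move=> s0; rewrite /pn expRN lnK. Qed.

Lemma pn_prob x : 0 < ssum x -> (forall y, 0 <= pn x y) /\ \sum_(y < K) pn x y = 1.
Proof.
move=> s0; split.
  by move=> y; rewrite pnE // divr_ge0 ?etar_ge0 // ltW.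
under eq_bigr do rewrite pnE //.
by rewrite -mulr_suml divff // gt_eqF.
Qed.

Lemma et_pn x y : 0 < ssum x -> et y x = ssum x * pn x y.
Proof. by move=> s0; rewrite pnE // mulrC divfK // gt_eqF. Qed.

Lemma Cc_scale v x : 0 < ssum x -> Cc v (fun y => et y x) = ssum x * Cc v (pn x).
Proof.
move=> s0; rewrite /Ccr mulr_sumr; apply: eq_bigr => y _.
by rewrite et_pn // mulrA.
Qed.

Lemma et0 x : ssum x = 0 -> forall y, et y x = 0.
Proof.
move=> s0 y; apply: (psumr_eq0P _ s0) => // i _; exact: etar_ge0.
Qed.

Lemma Cc0 v x : ssum x = 0 -> Cc v (fun y => et y x) = 0.
Proof. by move=> s0; rewrite /Ccr big1 // => y _; rewrite et0 // mul0r. Qed.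

Lemma ssum_case x : ssum x = 0 \/ 0 < ssum x.
Proof. by have := ssum_ge0 x; rewrite le_eqVlt => /orP[/eqP <-|]; [left|right]. Qed.

Lemma mssum : measurable_fun setT ssum.
Proof. by apply: measurable_sum => y; exact: metar. Qed.

Lemma mpn y : measurable_fun setT (fun x => pn x y).
Proof.
apply: measurable_funM; first exact: metar.
apply: measurableT_comp => //; apply: measurable_funN.
by apply: measurableT_comp => //; exact: mssum.
Qed.

Variable gbar : S -> 'I_K -> R.
Hypothesis mgbar : mscore gbar.

Definition gp x := vp R K a c (gbar x) (pn x).

Lemma mgp : mscore gp.
Proof.
move=> k; rewrite /gp /vp; apply: measurableT_comp => //.
apply: measurable_funM => //; apply: measurable_funD.
  exact: (@mqL R K hK dS S gbar mgbar).
case: c => /=; try exact: mpn.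
rewrite /smooth; apply: measurable_funD => //; apply: measurable_funM => //.
exact: mpn.
Qed.

Lemma fact1 x : Cc (gp x) (fun y => et y x) <= Cc (gbar x) (fun y => et y x).
Proof.
case: (ssum_case x) => s0; first by rewrite !Cc0.
rewrite !Cc_scale //; apply: ler_wpM2l; first exact: ltW.
have [p0 p1] := pn_prob x s0.
exact: (@pointwise R K hK a ha c (gbar x) (pn x) p0 p1).1.
Qed.

Lemma fact2 x : Cc (gbar x) (fun y => et y x) <= Cc (gp x) (fun y => et y x) ->
  0 < ssum x -> forall k, qdec c a (gbar x) k = pn x k.
Proof.
move=> h s0; rewrite !Cc_scale // ler_pM2l // in h.
have [p0 p1] := pn_prob x s0.
exact: (@pointwise R K hK a ha c (gbar x) (pn x) p0 p1).2.
Qed.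


Hypothesis gbar_min : forall g : S -> 'I_K -> R, mscore g ->
  (\int[P]_w (phi c a (gbar (X w)) (Y w))%:E <= \int[P]_w (phi c a (g (X w)) (Y w))%:E)%E.
Variable h : ('I_K -> R) -> 'I_K.
Hypothesis hdec : is_decision_rule (qdec c a) ell h.
Hypothesis mh : forall k, measurable ((fun x => h (gbar x)) @^-1` [set k]).

Local Notation A := (fun x => Cc (gbar x) (fun y => et y x)).
Local Notation B := (fun x => Cc (gp x) (fun y => et y x)).

Lemma IA_fin : (\int[P]_w (A (X w))%:E < +oo)%E.
Proof.
rewrite -riskE //.
pose g0 : S -> 'I_K -> R := fun _ _ => 0.
have mg0 : mscore g0 by move=> k; exact: measurable_cst.
have H := gbar_min g0 mg0.
rewrite (le_lt_trans H) //.
pose M := \sum_(y < K) phi c a (fun _ : 'I_K => 0) y.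
apply: (@le_lt_trans _ _ (\int[P]_w (cst M%:E) w)%E).
  apply: ge0_le_integral => //.
  - by move=> w _; rewrite lee_fin phi_ge0.
  - apply/measurable_EFinP.
    exact: (@mclass R K dT T Y (phi c a (fun _ => 0)) mY).
  - move=> w _; rewrite lee_fin /M /g0 (bigD1 (Y w)) //= lerDl.
    by apply: sumr_ge0 => y _; exact: phi_ge0.
rewrite integral_cst //.
apply: lte_mul_pinfty => //.
  by rewrite lee_fin; apply: sumr_ge0 => y _; exact: phi_ge0.
have h1 := probability_le1 P (@measurableT _ T).
exact: (le_lt_trans h1 (ltry 1)).
Qed.

Lemma mAX : measurable_fun setT (fun w => A (X w)).
Proof. exact: measurableT_comp (mCc gbar mgbar) mX. Qed.

Lemma mBX : measurable_fun setT (fun w => B (X w)).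
Proof. exact: measurableT_comp (mCc gp mgp) mX. Qed.

Lemma A_ge0 x : 0 <= A x.
Proof. by apply: Cc_ge0 => y; exact: etar_ge0. Qed.

Lemma B_ge0 x : 0 <= B x.
Proof. by apply: Cc_ge0 => y; exact: etar_ge0. Qed.

Lemma IB_le : (\int[P]_w (B (X w))%:E <= \int[P]_w (A (X w))%:E)%E.
Proof.
apply: ge0_le_integral => //.
- by move=> w _; rewrite lee_fin B_ge0.
- exact/measurable_EFinP/mBX.
- exact/measurable_EFinP/mAX.
- by move=> w _; rewrite lee_fin fact1.
Qed.

Lemma IA_le : (\int[P]_w (A (X w))%:E <= \int[P]_w (B (X w))%:E)%E.
Proof. rewrite -riskE // -riskE; [exact: gbar_min gp mgp|exact: mgp]. Qed.

Lemma ae_AB : ae_eq P setT (fun w => (A (X w) - B (X w))%:E) (cst 0%E).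
Proof.
have mAB : measurable_fun setT (fun w => (A (X w) - B (X w))%:E).
  by apply/measurable_EFinP; apply: measurable_funB; [exact: mAX|exact: mBX].
apply/(ae_eq_integral_abs P measurableT mAB).
have iA : P.-integrable setT (fun w => (A (X w))%:E).
  apply/integrableP; split; first exact/measurable_EFinP/mAX.
  under eq_integral do rewrite gee0_abs ?lee_fin ?A_ge0 //.
  exact: IA_fin.
have iB : P.-integrable setT (fun w => (B (X w))%:E).
  apply/integrableP; split; first exact/measurable_EFinP/mBX.
  under eq_integral do rewrite gee0_abs ?lee_fin ?B_ge0 //.
  exact: le_lt_trans IB_le IA_fin.
transitivity (\int[P]_w ((A (X w))%:E - (B (X w))%:E))%E.
  apply: eq_integral => w _; rewrite gee0_abs ?EFinB //.
  by rewrite lee_fin subr_ge0 fact1.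
rewrite integralB //.
have -> : (\int[P]_w (A (X w))%:E = \int[P]_w (B (X w))%:E)%E.
  by apply/eqP; rewrite eq_le IA_le IB_le.
rewrite subee // ge0_fin_numE; first exact: le_lt_trans IB_le IA_fin.
by apply: integral_ge0 => w _; rewrite lee_fin B_ge0.
Qed.

Lemma final (f : S -> 'I_K) : (forall k, measurable (f @^-1` [set k])) ->
  (\int[P]_w (ell (h (gbar (X w))) (Y w))%:E <= \int[P]_w (ell (f (X w)) (Y w))%:E)%E.
Proof.
move=> mf.
rewrite (@risk_decomp R dT T P K dS S X Y mX mY (fun y x => ell (h (gbar x)) y)); last 2 first.
- by move=> y x; exact: ell_ge0.
- by move=> y; exact: (@mclass R K dS S (fun x => h (gbar x)) (ell^~ y) mh).
rewrite (@risk_decomp R dT T P K dS S X Y mX mY (fun y x => ell (f x) y)); last 2 first.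
- by move=> y x; exact: ell_ge0.
- by move=> y; exact: (@mclass R K dS S f (ell^~ y) mf).
apply: ae_ge0_le_integral => //.
- by move=> w _; rewrite lee_fin; apply: sumr_ge0 => y _; rewrite mulr_ge0 ?ell_ge0 ?etar_ge0.
- apply/measurable_EFinP.
  have mF : measurable_fun setT (fun x => \sum_(y < K) ell (h (gbar x)) y * et y x).
    apply: measurable_sum => y; apply: measurable_funM; last exact: metar.
    exact: (@mclass R K dS S (fun x => h (gbar x)) (ell^~ y) mh).
  exact: measurableT_comp mF mX.
- by move=> w _; rewrite lee_fin; apply: sumr_ge0 => y _; rewrite mulr_ge0 ?ell_ge0 ?etar_ge0.
- apply/measurable_EFinP.
  have mF : measurable_fun setT (fun x => \sum_(y < K) ell (f x) y * et y x).
    apply: measurable_sum => y; apply: measurable_funM; last exact: metar.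
    exact: (@mclass R K dS S f (ell^~ y) mf).
  exact: measurableT_comp mF mX.
have := ae_AB; apply: filterS => w hw _.
have hw' := hw Logic.I; rewrite lee_fin.
case: (ssum_case (X w)) => s0.
  by rewrite !big1 // => y _; rewrite et0 // mulr0.
have AB : A (X w) <= B (X w).
  by move: hw' => /= /eqP; rewrite eqe subr_eq0 => /eqP ->.
have q := fact2 (X w) AB s0.
under eq_bigr do rewrite et_pn // mulrCA.
under [X in _ <= X]eq_bigr do rewrite et_pn // mulrCA.
rewrite -!mulr_sumr; apply: ler_wpM2l; first exact: ltW.
have hd := hdec (gbar (X w)) (f (X w)).
under eq_bigr do rewrite -q.
under [X in _ <= X]eq_bigr do rewrite -q.
by under eq_bigr do rewrite mulrC; under [X in _ <= X]eq_bigr do rewrite mulrC.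
Qed.

Theorem main_gen :
  (\int[P]_w (ell (h (gbar (X w))) (Y w))%:E =
   ereal_inf [set \int[P]_w (ell (f (X w)) (Y w))%:E
             | f in (fun f : S -> 'I_K => forall k, measurable (f @^-1` [set k]))])%E.
Proof.
apply/eqP; rewrite eq_le; apply/andP; split.
- by apply/ereal_infP => _ [f mf <-]; exact: final.
- by apply: ereal_inf_lbound; exists (fun x => h (gbar x)).
Qed.

End Main.

Theorem proposition2 (R : realType) (dT : measure_display) (T : measurableType dT)
  (P : probability T R) (d K : nat) (hK : (2 <= K)%N)
  (X : T -> d.-tuple R) (Y : T -> 'I_K)
  (mX : measurable_fun setT X)
  (mY : forall k : 'I_K, measurable (Y @^-1` [set k]))
  (ell : 'I_K -> 'I_K -> R) (ell_ge0 : forall l k, 0 <= ell l k)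
  (a : R) (ha : (0 <= a < 1) \/ (1 < a <= K%:R / (K%:R - 1)))
  (c : loss_kind)
  (gbar : d.-tuple R -> 'I_K -> R) (mgbar : measurable_score gbar)
  (gbar_min : forall g : d.-tuple R -> 'I_K -> R, measurable_score g ->
     (\int[P]_w (phi c a (gbar (X w)) (Y w))%:E <=
      \int[P]_w (phi c a (g (X w)) (Y w))%:E)%E)
  (h : ('I_K -> R) -> 'I_K) (hdec : is_decision_rule (qdec c a) ell h)
  (mh : measurable_classifier (fun x => h (gbar x))) :
  (\int[P]_w (ell (h (gbar (X w))) (Y w))%:E =
   ereal_inf [set \int[P]_w (ell (f (X w)) (Y w))%:E
             | f in measurable_classifier (K := K) (d := d) (R := R)])%E.
Proof.
exact: (@main_gen R dT T P K hK _ _ X Y mX mY ell ell_ge0 a ha c gbar mgbar gbar_min h hdec mh).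
Qed.
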